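(* Let $(S,|\cdot|)$ be a finite metric space with $n\ge 3$ points, let $t\ge 1$ be a real number, and let $G'=(S,E')$ be a $t$-spanner for $S$ with $m$ edges. Let $G=(S,E)$ be the graph obtained from $G'$ by the construction described in the context with parameter $f=1$. Then $G$ is a $1$-faulty-degree $(3t)$-spanner for $S$ and has at most $3m$ edges.
   Context: For a finite metric space $(S,|\cdot|)$, $K_S$ denotes the complete graph on $S$ in which each edge $\{p,q\}$ has weight $|pq|$. All graphs on vertex set $S$ considered have edge weights $|pq|$. For an edge-weighted graph $X$ and vertices $p,q$, $\delta_X(p,q)$ is the length of a shortest path between $p$ and $q$ in $X$ ($+\infty$ if none exists). For a set $F$ of edges, $X\setminus F$ is the graph with the same vertex set as $X$ and edge set $E_X\setminus F$. A graph $G'=(S,E')$ is a $t$-spanner for $S$ if $\delta_{G'}(p,q)\le t|pq|$ for all $p,q\in S$. For an integer $f\ge 0$ and real $t\ge1$, a graph $G=(S,E)$ is an $f$-faulty-degree $t$-spanner for $S$ if for every subset $F\subseteq E$ such that the graph $(S,F)$ has maximum degree at most $f$, and for all $p,q\in S$, $\delta_{G\setminus F}(p,q)\le t\cdot\delta_{K_S\setminus F}(p,q)$. Construction: Let $G'=(S,E')$ be a $t$-spanner for $S$, $n=|S|$, and let $f$ be an integer with $1\le f\le (n-1)/2$. For each edge $\{a,b\}\in E'$, list the points of $S\setminus\{a,b\}$ as $c_1,\dots,c_{n-2}$ in non-decreasing order of $|ac_i|+|c_ib|$ (ties broken arbitrarily) and let $C_{ab}=\{c_1,\dots,c_{2f-1}\}$.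 The graph $G=(S,E)$ has edge set $E=E'\cup\{\{a,c\},\{c,b\}:\{a,b\}\in E',\ c\in C_{ab}\}$. *)

(* Defs.v *)
From HB Require Import structures.
From mathcomp Require Import all_boot all_order all_algebra.
From mathcomp Require Import classical_sets reals constructive_ereal ereal.
Set Implicit Arguments. Unset Strict Implicit. Unset Printing Implicit Defensive.
Import Order.TTheory GRing.Theory Num.Theory.
Local Open Scope ring_scope.

Section Defs.
Variables (R : realType) (T : finType) (d : T -> T -> R).

Definition is_metric : Prop :=
  [/\ forall x y, d x y = 0 <-> x = y,
      forall x y, 0 <= d x y,
      forall x y, d x y = d y x &
      forall x y z, d x z <= d x y + d y z].

(* edges of a graph on T are 2-element subsets; K_S has all of them *)
Definition complete_edges : {set {set T}} := [set e : {set T} | #|e| == 2].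

Definition is_walk (E : {set {set T}}) (p q : T) (s : seq T) : bool :=
  path (fun x y => [set x; y] \in E) p s && (last p s == q).

Definition walk_length (p : T) (s : seq T) : R :=
  \sum_(xy <- zip (p :: s) s) d xy.1 xy.2.

(* shortest-path distance delta_X(p,q), +oo if no path *)
Definition delta (E : {set {set T}}) (p q : T) : \bar R :=
  ereal_inf [set (walk_length p s)%:E | s in [set s | is_walk E p q s]].

Definition is_spanner (E : {set {set T}}) (t : R) : Prop :=
  forall p q, (delta E p q <= (t * d p q)%:E)%E.

Definition max_deg_le (F : {set {set T}}) (f : nat) : Prop :=
  forall v : T, (#|[set e in F | v \in e]| <= f)%N.

Definition is_fault_degree_spanner (E : {set {set T}}) (f : nat) (t : R) : Prop :=
  forall F : {set {set T}}, F \subset E -> max_deg_le F f ->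
  forall p q, (delta (E :\: F) p q <= t%:E * delta (complete_edges :\: F) p q)%E.

(* the construction with f = 1: for each edge e = {a,b} of E', ch e is the
   point c_1 of C_ab; add the edges {a, c_1} and {c_1, b}. *)
Definition construction (E' : {set {set T}}) (ch : {set T} -> T) : {set {set T}} :=
  E' :|: \bigcup_(e in E') [set [set x; ch e] | x in e].

Definition valid_choice (E' : {set {set T}}) (ch : {set T} -> T) : Prop :=
  forall a b, [set a; b] \in E' ->
    ch [set a; b] \notin [set a; b] /\
    forall c, c \notin [set a; b] ->
      d a (ch [set a; b]) + d (ch [set a; b]) b <= d a c + d c b.

End Defs.

(* Main.v *)
Require Import Defs.
From HB Require Import structures.
From mathcomp Require Import all_boot all_order all_algebra.
From mathcomp Require Import classical_sets reals constructive_ereal ereal.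
From mathcomp Require Import lra.
Import Order.TTheory GRing.Theory Num.Theory.
Local Open Scope ring_scope.
Set Implicit Arguments. Unset Strict Implicit. Unset Printing Implicit Defensive.

Section W.
Variables (R : realType) (T : finType) (d : T -> T -> R).
Hypothesis dm : is_metric d.

Lemma d_ge0 x y : 0 <= d x y. Proof. by case: dm. Qed.
Lemma d_sym x y : d x y = d y x. Proof. by case: dm. Qed.
Lemma d_tri x y z : d x z <= d x y + d y z. Proof. by case: dm. Qed.

Lemma wl_nil p : walk_length d p [::] = 0.
Proof. by rewrite /walk_length big_nil. Qed.

Lemma wl_cons p x s : walk_length d p (x :: s) = d p x + walk_length d x s.
Proof. by rewrite /walk_length /= big_cons. Qed.

Lemma wl_cat p s1 s2 :
  walk_length d p (s1 ++ s2) = walk_length d p s1 + walk_length d (last p s1) s2.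
Proof.
elim: s1 p => [|x s1 IH] p /=; first by rewrite wl_nil add0r.
by rewrite !wl_cons IH addrA.
Qed.

Lemma wl_ge0 p s : 0 <= walk_length d p s.
Proof. elim: s p => [|x s IH] p; first by rewrite wl_nil. by rewrite wl_cons addr_ge0 ?d_ge0. Qed.

Definition okw (E : {set {set T}}) p q (r : R) :=
  exists s, is_walk E p q s /\ walk_length d p s <= r.

Lemma okw0 (E : {set {set T}}) p r : 0 <= r -> okw E p p r.
Proof. by move=> r0; exists [::]; rewrite /is_walk /= eqxx wl_nil. Qed.

Lemma okw_edge (E : {set {set T}}) p q r : [set p; q] \in E -> d p q <= r -> okw E p q r.
Proof.
move=> pq le; exists [:: q]; rewrite /is_walk /= pq eqxx wl_cons wl_nil addr0.
by [].
Qed.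

Lemma okw_trans (E : {set {set T}}) p q z r1 r2 : okw E p q r1 -> okw E q z r2 -> okw E p z (r1 + r2).
Proof.
move=> [s1 [/andP[w1 /eqP l1] le1]] [s2 [/andP[w2 /eqP l2] le2]].
exists (s1 ++ s2); rewrite /is_walk cat_path last_cat l1 w1 w2 l2 eqxx; split=> //.
by rewrite wl_cat l1 lerD.
Qed.

Lemma okw_le (E : {set {set T}}) p q r1 r2 : r1 <= r2 -> okw E p q r1 -> okw E p q r2.
Proof. by move=> le [s [w l]]; exists s; split=> //; apply: le_trans le. Qed.

Lemma shorten_walk (e : rel T) x s : path e x s ->
  exists s', [/\ uniq (x :: s'), path e x s', last x s' = last x s &
    walk_length d x s' <= walk_length d x s].
Proof.
elim: s x => [|y s IH] x /=.
  by move=> _; exists [::].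
case/andP=> exy /IH [s0 [u0 p0 l0 w0]].
case: (boolP (x \in y :: s0)) => xin.
  have [pre [post Hs]] : exists pre post, y :: s0 = pre ++ x :: post.
    by case/splitPr: xin => pre post; exists pre, post.
  case: pre Hs => [|z pre] /= [Hy Hs]; subst.
    exists post; split=> //.
    by rewrite wl_cons; apply: le_trans w0 _; rewrite lerDr d_ge0.
  move: p0; rewrite cat_path /= => /andP[_ /andP[_ pp]].
  exists post; split=> //.
  - by move: u0; rewrite -cat_cons cat_uniq => /and3P[].
  - by rewrite -l0 last_cat.
  - rewrite wl_cons; apply: le_trans (lerD (d_ge0 _ _) w0); rewrite add0r.
    rewrite wl_cat wl_cons addrA lerDr; apply: addr_ge0; [exact: wl_ge0|exact: d_ge0].
exists (y :: s0); split => //.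
- by apply/andP; split.
- by rewrite /= exy p0.
- by rewrite wl_cons [X in _ <= X]wl_cons lerD.
Qed.

Section Main.
Variables (E' F : {set {set T}}) (ch : {set T} -> T).
Hypothesis hv : valid_choice d E' ch.
Hypothesis hFE : F \subset construction E' ch.
Hypothesis hdeg : max_deg_le F 1.
Let EF := construction E' ch :\: F.
Let rE' := fun x y => [set x; y] \in E'.

Lemma set2C (x y : T) : [set x; y] = [set y; x].
Proof. exact: finset.setUC. Qed.

Lemma deg2 e1 e2 v : e1 \in F -> e2 \in F -> v \in e1 -> v \in e2 -> e1 = e2.
Proof.
move=> h1 h2 v1 v2; apply/eqP; apply/negPn/negP => ne.
have le : (#|[set e1; e2]| <= #|[set e in F | v \in e]|)%N.
  apply: subset_leq_card; apply/fintype.subsetP => e.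
  by rewrite !inE => /orP[] /eqP ->; rewrite ?h1 ?h2 ?v1 ?v2.
by move: le; rewrite cards2 ne => /leq_trans/(_ (hdeg v)).
Qed.

Lemma adjF a b c : [set a; b] \in F -> c != a -> c != b -> [set b; c] \notin F.
Proof.
move=> hab ca cb; apply/negP => hbc.
have := @deg2 _ _ b hab hbc; rewrite !inE !eqxx orbT => /(_ isT isT) e.
have : c \in [set a; b] by rewrite e !inE eqxx orbT.
by rewrite !inE (negPf ca) (negPf cb).
Qed.

Lemma inC_E e : e \in E' -> e \in construction E' ch.
Proof. by rewrite /construction inE => ->. Qed.

Lemma inC_ch a b x : [set a; b] \in E' -> x \in [set a; b] ->
  [set x; ch [set a; b]] \in construction E' ch.
Proof.
move=> hab hx; rewrite /construction inE; apply/orP; right.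
by apply/bigcupP; exists [set a; b] => //; apply: imset_f.
Qed.

Lemma edgeEF x y : [set x; y] \in E' -> [set x; y] \notin F -> okw EF x y (d x y).
Proof. by move=> h nf; apply: okw_edge => //; rewrite /EF inE nf inC_E. Qed.

Lemma detour a b u : [set a; b] \in E' -> [set a; b] \in F -> u \notin [set a; b] ->
  okw EF a b (d a u + d u b).
Proof.
move=> hE hF hu; have [cn cmin] := hv hE; set c := ch [set a; b] in cn cmin *.
move: (cn); rewrite !inE negb_or => /andP[ca cb].
apply: okw_le (cmin _ hu) _; apply: okw_trans.
- apply: okw_edge => //; rewrite /EF inE inC_ch ?inE ?eqxx // andbT.
  apply/negP => h; have := @deg2 _ _ a hF h; rewrite !inE !eqxx /= => /(_ isT isT) e.
  by move: cn; rewrite e !inE eqxx ?orbT.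
- apply: okw_edge => //; rewrite /EF inE (set2C c) inC_ch ?inE ?eqxx ?orbT // andbT.
  apply/negP => h; have := @deg2 _ _ b hF h; rewrite !inE !eqxx orbT /= => /(_ isT isT) e.
  by move: cn; rewrite e !inE eqxx ?orbT.
Qed.
Lemma block v0 v1 v2 v3 : uniq [:: v0; v1; v2; v3] ->
  [set v0; v1] \in E' -> [set v0; v1] \in F -> [set v1; v2] \in E' ->
  [set v2; v3] \in E' -> [set v2; v3] \in F ->
  okw EF v0 v3 (3 * (d v0 v1 + d v1 v2 + d v2 v3)).
Proof.
rewrite /= !inE !negb_or => /and4P[/and3P[n01 n02 n03] /andP[n12 n13] n23 _].
move=> e01 f01 e12 e23 f23.
have nf12 : [set v1; v2] \notin F by apply: (adjF f01); rewrite eq_sym.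
have [cn cmin] := hv e12; set c := ch [set v1; v2] in cn cmin *.
move: (cn); rewrite !inE negb_or => /andP[c1 c2].
have t012 := d_tri v0 v1 v2. have t013 := d_tri v0 v1 v3. have t123 := d_tri v1 v2 v3.
have t023 := d_tri v0 v2 v3.
have s01 := d_sym v0 v1. have s12 := d_sym v1 v2. have s23 := d_sym v2 v3.
have s02 := d_sym v0 v2. have s13 := d_sym v1 v3. have s03 := d_sym v0 v3.
have g01 := d_ge0 v0 v1. have g12 := d_ge0 v1 v2. have g23 := d_ge0 v2 v3.
case: (eqVneq c v0) => [c0|c0].
  have h02 : [set v0; v2] \in EF.
    rewrite /EF inE (set2C v0) -c0 inC_ch ?inE ?eqxx ?orbT // andbT c0.
    rewrite set2C; apply: (@adjF v1); by [rewrite set2C|rewrite eq_sym].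
  have := okw_trans (okw_edge h02 (lexx _)) (@detour v2 v3 v0 e23 f23 _).
  rewrite !inE negb_or n02 n03 => /(_ isT); apply: okw_le.
  have := cmin v0; rewrite !inE negb_or n01 n02 => /(_ isT) _.
  lra.
case: (eqVneq c v3) => [c3|c3].
  have h13 : [set v1; v3] \in EF.
    rewrite /EF inE -c3 inC_ch ?inE ?eqxx // andbT c3 set2C.
    by apply: (@adjF v2).
  have := okw_trans (@detour v0 v1 v3 e01 f01 _) (okw_edge h13 (lexx _)).
  rewrite !inE negb_or (eq_sym v3 v0) n03 (eq_sym v3 v1) n13 => /(_ isT); apply: okw_le.
  lra.
have := okw_trans (okw_trans (@detour v0 v1 c e01 f01 _) (edgeEF e12 nf12))
  (@detour v2 v3 c e23 f23 _).
rewrite !inE !negb_or c0 c1 c2 c3 => /(_ isT isT); apply: okw_le.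
have m0 := cmin v0; rewrite !inE negb_or n01 n02 in m0; have {m0} m0 := m0 isT.
have m3 := cmin v3; rewrite !inE negb_or (eq_sym v3 v1) n13 (eq_sym v3 v2) n23 in m3; have {m3} m3 := m3 isT.
have := d_tri v0 v1 c. have := d_tri c v2 v3.
have := d_sym c v1. have := d_sym v2 c. have := d_sym v3 v2. have := d_sym v3 v1.
lra.
Qed.
Definition cond v0 (s : seq T) := if s is [:: v1] then [set v0; v1] \notin F else true.

Lemma mainL n : forall v0 s, (size s <= n)%N -> uniq (v0 :: s) ->
  path rE' v0 s -> cond v0 s ->
  okw EF v0 (last v0 s) (3 * walk_length d v0 s).
Proof.
elim: n => [|n IH] v0 [|v1 s] //=.
- by move=> *; rewrite wl_nil mulr0; apply: okw0.
- by move=> *; rewrite wl_nil mulr0; apply: okw0.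
case: s => [|v2 s] /=.
  move=> _ _ /andP[e01 _] nf; rewrite wl_cons wl_nil addr0.
  by apply: okw_le (edgeEF e01 nf); have := d_ge0 v0 v1; lra.
rewrite ltnS => sz u /and3P[e01 e12 p2] _.
have U : uniq [:: v0, v1, v2 & s] := u.
have u1 : uniq [:: v1, v2 & s] by case/andP: u.
move: (u); rewrite /= !inE !negb_or => /andP[/andP[n01 /andP[n02 n0s]] /andP[/andP[n12 n1s] _]].
have g01 := d_ge0 v0 v1. have g12 := d_ge0 v1 v2.
have s01 := d_sym v0 v1. have s12 := d_sym v1 v2.
have t012 := d_tri v0 v1 v2. have s02 := d_sym v0 v2.
rewrite !wl_cons.
case: (boolP ([set v0; v1] \in F)) => f01; last first.
  case: (boolP ((s == [::]) && ([set v1; v2] \in F))) => [/andP[/eqP s0 f12]|hc].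
    subst s => /=; rewrite wl_nil addr0.
    have := okw_trans (edgeEF e01 f01) (@detour v1 v2 v0 e12 f12 _).
    rewrite !inE negb_or n01 n02 => /(_ isT).
    by apply: okw_le; lra.
  have := IH v1 (v2 :: s) sz u1 _ _.
  rewrite /= e12 p2 => /(_ isT).
  case: s hc {sz u U u1 p2 n0s n1s} => [|v3 s] hc /=; last first.
    rewrite wl_cons => /(_ isT) h; have := okw_trans (edgeEF e01 f01) h.
    by apply: okw_le; have := wl_ge0 v3 s; have := d_ge0 v2 v3; lra.
  rewrite andTb in hc; rewrite wl_nil addr0 => /(_ hc); rewrite wl_cons wl_nil addr0 => h.
  by have := okw_trans (edgeEF e01 f01) h; apply: okw_le; lra.
have nf12 : [set v1; v2] \notin F by apply: (adjF f01); rewrite eq_sym.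
have h01 := @detour v0 v1 v2 e01 f01.
rewrite !inE negb_or (eq_sym v2 v0) n02 (eq_sym v2 v1) n12 in h01.
have {}h01 := okw_trans (h01 isT) (edgeEF e12 nf12).
case: s sz u U u1 p2 n0s n1s => [|v3 s] sz u U u1 p2 n0s n1s /=.
  by rewrite wl_nil addr0; apply: okw_le h01; have := d_sym v2 v1; lra.
move: p2 => /andP[e23 p3].
have g23 := d_ge0 v2 v3. have gs := wl_ge0 v3 s.
case: (boolP ([set v2; v3] \in F)) => f23; last first.
  have u2 : uniq [:: v2, v3 & s] by case/andP: u1.
  have p23 : path rE' v2 (v3 :: s) by apply/andP; split.
  have := IH v2 (v3 :: s) (ltnW sz) u2 p23.
  case: s {sz u U u1 u2 p23 p3 n0s n1s gs} => [|v4 s] /=.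
    rewrite !wl_cons !wl_nil !addr0 => /(_ f23) h.
    by have := okw_trans h01 h; apply: okw_le; have := d_sym v2 v1; lra.
  rewrite wl_cons => /(_ isT) h; have := okw_trans h01 h.
  by apply: okw_le; have := d_sym v2 v1; have := wl_ge0 v4 s; have := d_ge0 v3 v4; lra.
have ub : uniq [:: v0; v1; v2; v3].
  by move: U; rewrite -[[:: v0, v1, v2, v3 & s]]/([:: v0; v1; v2; v3] ++ s) cat_uniq => /andP[].
have u3 : uniq (v3 :: s).
  by move: U; rewrite -[[:: v0, v1, v2, v3 & s]]/([:: v0; v1; v2] ++ v3 :: s) cat_uniq => /and3P[].
have hb := block ub e01 f01 e12 e23 f23.
have c3 : cond v3 s.
  case: s {sz u u1 p3 n0s n1s gs u3 hb} => [|v4 [|v5 s]] //= in U *.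
  by apply: (adjF f23); apply/eqP => e; subst; move: U; rewrite /= !inE !eqxx /= ?orbT ?andbF.
have := IH v3 s (ltnW (ltnW sz)) u3 p3 c3.
move=> h; have := okw_trans hb h; rewrite wl_cons.
by apply: okw_le; lra.
Qed.
End Main.

Section Final.
Local Open Scope ereal_scope.

Lemma okw_delta (E : {set {set T}}) p q (r : R) : okw E p q r -> delta d E p q <= r%:E.
Proof.
move=> [s [w l]]; apply: le_trans (_ : (walk_length d p s)%:E <= r%:E); last by rewrite lee_fin.
by apply: ereal_inf_lbound; exists s.
Qed.
End Final.

Section Final2.
Variables (E' F : {set {set T}}) (ch : {set T} -> T) (t : R).
Hypothesis hv : valid_choice d E' ch.
Hypothesis hdeg : max_deg_le F 1.
Hypothesis hsp : is_spanner d E' t.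
Hypothesis ht : 1 <= t.
Let EF := construction E' ch :\: F.

Lemma edge_eps x y e : 0 < e -> [set x; y] \notin F -> okw EF x y (3 * (t * d x y) + e).
Proof.
move=> e0 nf.
have : (delta d E' x y < (t * d x y + e / 3)%:E)%E.
  by apply: le_lt_trans (hsp x y) _; rewrite lte_fin ltrDl divr_gt0.
case/ereal_inf_lt => _ [s ws <-]; rewrite lte_fin => ls.
case/andP: ws => ps /eqP ls'.
have [s' [u p l w]] := shorten_walk ps.
have := mainL hv hdeg (leqnn (size s')) u p.
have c : cond F x s'.
  case: s' l {u p w} => [|v1 [|v2 s']] //= ->; by rewrite ls'.
move=> /(_ c); rewrite l ls'; apply: okw_le.
have := wl_ge0 x s'; lra.
Qed.

Lemma walk_eps p q s e : 0 < e -> is_walk (complete_edges T :\: F) p q s ->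
  okw EF p q (3 * t * walk_length d p s + e).
Proof.
elim: s p e => [|x s IH] p e e0 /andP[ps /eqP l].
  by rewrite /= in l; rewrite -l wl_nil mulr0 add0r; apply: okw0; rewrite ltW.
move: ps => /= /andP[ex ps].
have h1 : [set p; x] \notin F by move: ex; rewrite inE => /andP[].
have h2 := edge_eps (divr_gt0 e0 (ltr0Sn _ 1)) h1.
have h3 := IH x (e / 2) (divr_gt0 e0 (ltr0Sn _ 1)) (introT andP (conj ps (introT eqP l))).
apply: okw_le (okw_trans h2 h3); rewrite wl_cons; lra.
Qed.
End Final2.
End W.

Lemma card_bigcup_le (T : finType) (I : finType) (A : {pred I}) (f : I -> {set T}) :
  (#|\bigcup_(i in A) f i| <= \sum_(i in A) #|f i|)%N.
Proof.
apply: (big_ind2 (fun (S : {set T}) (n : nat) => #|S| <= n)%N).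
- by rewrite cards0.
- move=> S1 n1 S2 n2 h1 h2; apply: leq_trans (leq_card_setU S1 S2).1 _.
  exact: leq_add.
- by [].
Qed.

Unset Implicit Arguments.

Theorem theorem1 (R : realType) (T : finType) (d : T -> T -> R)
  (t : R) (E' : {set {set T}}) (ch : {set T} -> T) :
  is_metric d -> (3 <= #|T|)%N -> 1 <= t ->
  E' \subset complete_edges T -> is_spanner d E' t ->
  valid_choice d E' ch ->
  is_fault_degree_spanner d (construction E' ch) 1 (3 * t) /\
  (#|construction E' ch| <= 3 * #|E'|)%N.
Proof.
move=> dm T3 ht sub hsp hv; split.
- move=> F hFE hdeg p q.
  have t0 : 0 < 3 * t by lra.
  rewrite -lee_pdivrMl //; apply: le_ereal_inf_tmp => _ [s ws <-].
  rewrite lee_pdivrMl // -EFinM.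
  apply/lee_addgt0Pr => e e0; rewrite -EFinD.
  apply: okw_delta; exact: (walk_eps dm hv hdeg hsp e0 ws).
- rewrite /construction; apply: leq_trans (leq_card_setU _ _).1 _.
  rewrite mulSn leq_add2l; apply: leq_trans (card_bigcup_le _ _) _.
  rewrite mulnC -sum_nat_const; apply: leq_sum => e eE.
  apply: leq_trans (leq_imset_card _ _) _.
  by move/fintype.subsetP: sub => /(_ e eE); rewrite inE => /eqP ->.
Qed.
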